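(* There is an $\mathrm{FP}$-formula $\varphi_{1}(x,y,y')$ over the vocabulary $\{E\}$ such that for all prime permutation graphs $G=(V,E)$ and all $w,v,v'\in V$: $G\models\varphi_{1}[w,v,v']$ iff $v\vartriangleleft_1^w v'$; and for any such formula, $\varphi(x,y,y'):=\varphi_{1}(x,y,y')\lor y=y'$ defines orders on the class of prime permutation graphs, i.e., for every prime permutation graph $G$ there is $w\in V$ such that $\{(v,v')\mid G\models\varphi[w,v,v']\}$ is a linear order on $V$.
   Context: Graphs are finite, simple, undirected, with nonempty vertex set. A module of $G$ is a nonempty $M\subseteq V$ such that every vertex outside $M$ is adjacent to all or none of $M$; $G$ is prime if its only modules are $V$ and the singletons. A realizer of $G$ is a pair $(<_1,<_2)$ of strict linear orders on $V$ such that distinct $u,v$ are adjacent iff they appear in different orders in $<_1$ and $<_2$; $G$ is a permutation graph if it has a realizer. For a pair of binary relations $(\lhd_1,\lhd_2)$ on $V$: its transitive closure is $(\lhd_1^T,\lhd_2^T)$ (componentwise); its closure under $E$ is $(\lhd_1^E,\lhd_2^E)$ where, for $i\in[2]$, $\lhd_i^E=\lhd_i\cup\{(v,u)\mid u\lhd_{3-i}v,\ \{u,v\}\in E\}\cup\{(u,v)\mid u\lhd_{3-i}v,\ \{u,v\}\notin E\}$. For $w\in V$ define $\lhd_{1,0}^w=\{(w,v)\mid v\ne w\}$, $\lhd_{2,0}^w=\emptyset$, and for $k\ge0$, $(\lhd_{1,k+1}^w,\lhd_{2,k+1}^w)=((\lhd_{1,k}^w,\lhd_{2,k}^w)^E)^T$;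 $\lhd_i^w$ is the stabilized value. $\mathrm{FP}$ is (inflationary) fixed-point logic, i.e., first-order logic extended with inflationary fixed-point operators. *)

(* Defs.v *)
From mathcomp Require Import all_boot.
From Stdlib Require Import Relations.
Set Implicit Arguments. Unset Strict Implicit. Unset Printing Implicit Defensive.

Definition simple_graph (V : finType) (E : rel V) : Prop :=
  (exists v : V, True) /\ (forall u v, E u v = E v u) /\ (forall v, ~~ E v v).

Definition is_module (V : finType) (E : rel V) (M : {set V}) : Prop :=
  M != set0 /\
  forall x, x \notin M -> (forall m, m \in M -> E x m) \/ (forall m, m \in M -> ~~ E x m).

Definition prime_graph (V : finType) (E : rel V) : Prop :=
  forall M : {set V}, is_module E M -> M = [set: V] \/ #|M| = 1.

Definition strict_linear_order (V : Type) (lt : V -> V -> Prop) : Prop :=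
  (forall x, ~ lt x x) /\
  (forall x y z, lt x y -> lt y z -> lt x z) /\
  (forall x y, x <> y -> lt x y \/ lt y x).

Definition realizer (V : finType) (E : rel V) (lt1 lt2 : V -> V -> Prop) : Prop :=
  strict_linear_order lt1 /\ strict_linear_order lt2 /\
  forall u v, u <> v ->
    (E u v <-> ((lt1 u v /\ lt2 v u) \/ (lt1 v u /\ lt2 u v))).

Definition permutation_graph (V : finType) (E : rel V) : Prop :=
  exists lt1 lt2, realizer E lt1 lt2.

Definition linear_order (V : Type) (le : V -> V -> Prop) : Prop :=
  (forall x, le x x) /\
  (forall x y, le x y -> le y x -> x = y) /\
  (forall x y z, le x y -> le y z -> le x z) /\
  (forall x y, le x y \/ le y x).

Definition relpair (V : Type) := ((V -> V -> Prop) * (V -> V -> Prop))%type.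

Definition closE_comp (V : finType) (E : rel V) (li lo : V -> V -> Prop) : V -> V -> Prop :=
  fun a b => li a b \/ (lo b a /\ E b a) \/ (lo a b /\ ~~ E a b).

Definition closE (V : finType) (E : rel V) (p : relpair V) : relpair V :=
  (closE_comp E p.1 p.2, closE_comp E p.2 p.1).

Definition closT (V : Type) (p : relpair V) : relpair V :=
  (clos_trans V p.1, clos_trans V p.2).

Definition lhd0 (V : finType) (w : V) : relpair V :=
  (fun a b => a = w /\ b <> w, fun _ _ => False).

Definition lhd_k (V : finType) (E : rel V) (w : V) (k : nat) : relpair V :=
  iter k (fun p => closT (closE E p)) (lhd0 w).

(* stabilized value of the increasing sequence = its union *)
Definition lhd1 (V : finType) (E : rel V) (w : V) : V -> V -> Prop :=
  fun a b => exists k, (lhd_k E w k).1 a b.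

Inductive formula : Type :=
| FEdge of nat & nat
| FEq of nat & nat
| FRel of nat & seq nat
| FNot of formula
| FAnd of formula & formula
| FOr of formula & formula
| FExists of nat & formula
| FForall of nat & formula
| FIfp of nat & seq nat & formula & seq nat.
    (* FIfp X xs phi ts  =  [ifp_{X, xs} phi](ts) *)

Fixpoint fo_free (f : formula) : seq nat :=
  match f with
  | FEdge x y | FEq x y => [:: x; y]
  | FRel _ ts => ts
  | FNot g => fo_free g
  | FAnd g h | FOr g h => fo_free g ++ fo_free h
  | FExists x g | FForall x g => [seq i <- fo_free g | i != x]
  | FIfp _ xs g ts => ts ++ [seq i <- fo_free g | i \notin xs]
  end.

Fixpoint rel_free (f : formula) : seq nat :=
  match f with
  | FEdge _ _ | FEq _ _ => [::]
  | FRel r _ => [:: r]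
  | FNot g => rel_free g
  | FAnd g h | FOr g h => rel_free g ++ rel_free h
  | FExists _ g | FForall _ g => rel_free g
  | FIfp r _ g _ => [seq j <- rel_free g | j != r]
  end.

Definition upd (V : Type) (va : nat -> V) (x : nat) (a : V) : nat -> V :=
  fun i => if i == x then a else va i.

Definition upd_list (V : Type) (va : nat -> V) (xs : seq nat) (t : seq V) : nat -> V :=
  fun i => if i \in xs then nth (va i) t (index i xs) else va i.

Definition upd_rel (V : Type) (ra : nat -> seq V -> Prop) (r : nat) (S : seq V -> Prop)
  : nat -> seq V -> Prop :=
  fun j => if j == r then S else ra j.

Fixpoint sem (V : finType) (E : rel V) (f : formula)
  (va : nat -> V) (ra : nat -> seq V -> Prop) {struct f} : Prop :=
  match f with
  | FEdge x y => E (va x) (va y)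
  | FEq x y => va x = va y
  | FRel r ts => ra r (map va ts)
  | FNot g => ~ sem E g va ra
  | FAnd g h => sem E g va ra /\ sem E h va ra
  | FOr g h => sem E g va ra \/ sem E h va ra
  | FExists x g => exists a : V, sem E g (upd va x a) ra
  | FForall x g => forall a : V, sem E g (upd va x a) ra
  | FIfp r xs g ts =>
      let fix stage (n : nat) : seq V -> Prop :=
        match n with
        | 0 => fun _ => False
        | n'.+1 => fun t => stage n' t \/
            (size t = size xs /\ sem E g (upd_list va xs t) (upd_rel ra r (stage n')))
        end in
      exists n, stage n (map va ts)
  end.

(* phi has free first-order variables among {0,1,2} (= x, y, y')
   and no free relation variables (vocabulary {E}) *)
Definition formula_xyy' (f : formula) : Prop :=
  all (fun i => i \in [:: 0; 1; 2]) (fo_free f) /\ rel_free f = [::].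

Definition models3 (V : finType) (E : rel V) (f : formula) (a0 a1 a2 : V) : Prop :=
  sem E f (fun i => nth a0 [:: a0; a1; a2] i) (fun _ _ => False).

(* Main.v *)
Require Import Defs.
From Stdlib Require Import Relations Classical ClassicalEpsilon.
From mathcomp Require Import all_boot.
Set Implicit Arguments. Unset Strict Implicit. Unset Printing Implicit Defensive.

Definition Rf (p q : nat) := FRel 0 [:: p; q].
Definition Ff (p q : nat) :=
  FOr (FAnd (FEdge p q) (Rf q p)) (FAnd (FNot (FEdge p q)) (Rf p q)).
Definition body : formula :=
  FOr (FAnd (FEq 3 0) (FNot (FEq 4 0)))
  (FOr (FExists 5 (FAnd (Rf 3 5) (Rf 5 4)))
  (FOr (FAnd (FNot (FEdge 3 4)) (FExists 5 (FAnd (Ff 3 5) (Ff 5 4))))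
       (FAnd (FEdge 3 4) (FExists 5 (FAnd (Ff 4 5) (Ff 5 3)))))).
Definition phi1 := FIfp 0 [:: 3; 4] body [:: 1; 2].

Definition Fr (V : finType) (E : rel V) (P : seq V -> Prop) (p q : V) :=
  (E p q /\ P [:: q; p]) \/ (~ E p q /\ P [:: p; q]).
Definition Body (V : finType) (E : rel V) (x a b : V) (P : seq V -> Prop) :=
  (a = x /\ ~ b = x) \/ (exists c, P [:: a; c] /\ P [:: c; b]) \/
  (~ E a b /\ exists c, Fr E P a c /\ Fr E P c b) \/
  (E a b /\ exists c, Fr E P b c /\ Fr E P c a).

Lemma body_sem (V : finType) (E : rel V) va ra (P : seq V -> Prop) a b :
  sem E body (upd_list va [:: 3; 4] [:: a; b]) (upd_rel ra 0 P) = Body E (va 0) a b P.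
Proof. reflexivity. Qed.

Definition stg (V : finType) (E : rel V) (r : nat) xs g va ra :=
  fix stage (n : nat) : seq V -> Prop :=
  match n with
  | 0 => fun _ => False
  | n'.+1 => fun t => stage n' t \/
      (size t = size xs /\ sem E g (upd_list va xs t) (upd_rel ra r (stage n')))
  end.

Lemma sem_ifp (V : finType) (E : rel V) r xs g ts va ra :
  sem E (FIfp r xs g ts) va ra = exists n, stg E r xs g va ra n (map va ts).
Proof. reflexivity. Qed.

Lemma phi1_free : formula_xyy' phi1.
Proof. split; by []. Qed.

Lemma lhd_kS (V : finType) (E : rel V) w k :
  lhd_k E w k.+1 = closT (closE E (lhd_k E w k)).
Proof. by []. Qed.

Lemma lhd_le (V : finType) (E : rel V) w k m : k <= m ->
  (forall a b, (lhd_k E w k).1 a b -> (lhd_k E w m).1 a b) /\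
  (forall a b, (lhd_k E w k).2 a b -> (lhd_k E w m).2 a b).
Proof.
elim: m => [|m IH]; first by rewrite leqn0 => /eqP ->.
rewrite leq_eqVlt => /orP [/eqP -> //|]; rewrite ltnS => /IH [h1 h2].
split=> a b h; rewrite lhd_kS /=; apply: t_step; left; [exact: h1 | exact: h2].
Qed.

Definition L2 (V : finType) (E : rel V) (w : V) a b := exists k, (lhd_k E w k).2 a b.

Lemma L1_trans (V : finType) (E : rel V) w a b c :
  lhd1 E w a b -> lhd1 E w b c -> lhd1 E w a c.
Proof.
move=> [k1 h1] [k2 h2]; exists (maxn k1 k2).+1; rewrite lhd_kS /=.
apply: (t_trans _ _ _ b); apply: t_step; left.
  by apply: (proj1 (lhd_le E w (leq_maxl k1 k2))).
by apply: (proj1 (lhd_le E w (leq_maxr k1 k2))).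
Qed.

Lemma L2_trans (V : finType) (E : rel V) w a b c :
  L2 E w a b -> L2 E w b c -> L2 E w a c.
Proof.
move=> [k1 h1] [k2 h2]; exists (maxn k1 k2).+1; rewrite lhd_kS /=.
apply: (t_trans _ _ _ b); apply: t_step; left.
  by apply: (proj2 (lhd_le E w (leq_maxl k1 k2))).
by apply: (proj2 (lhd_le E w (leq_maxr k1 k2))).
Qed.

Lemma R1 (V : finType) (E : rel V) w u v : L2 E w u v -> E u v -> lhd1 E w v u.
Proof. move=> [k h] e; exists k.+1; rewrite lhd_kS /=; apply: t_step; by right; left. Qed.
Lemma R2 (V : finType) (E : rel V) w u v : L2 E w u v -> ~~ E u v -> lhd1 E w u v.
Proof. move=> [k h] e; exists k.+1; rewrite lhd_kS /=; apply: t_step; by right; right. Qed.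
Lemma R3 (V : finType) (E : rel V) w u v : lhd1 E w u v -> E u v -> L2 E w v u.
Proof. move=> [k h] e; exists k.+1; rewrite lhd_kS /=; apply: t_step; by right; left. Qed.
Lemma R4 (V : finType) (E : rel V) w u v : lhd1 E w u v -> ~~ E u v -> L2 E w u v.
Proof. move=> [k h] e; exists k.+1; rewrite lhd_kS /=; apply: t_step; by right; right. Qed.
Lemma Rbase (V : finType) (E : rel V) w v : v <> w -> lhd1 E w w v.
Proof. by move=> h; exists 0. Qed.

Lemma stg_le (V : finType) (E : rel V) r xs g va ra n m t : n <= m ->
  stg E r xs g va ra n t -> stg E r xs g va ra m t.
Proof.
elim: m => [|m IH]; first by rewrite leqn0 => /eqP ->.
rewrite leq_eqVlt => /orP [/eqP -> //|]; rewrite ltnS => /IH h /h. by left.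
Qed.

Lemma Fr_mono (V : finType) (E : rel V) (P Q : seq V -> Prop) p q :
  (forall t, P t -> Q t) -> Fr E P p q -> Fr E Q p q.
Proof. move=> h [[e hp]|[e hp]]; [left|right]; split=> //; exact: h. Qed.

Lemma Body_mono (V : finType) (E : rel V) (P Q : seq V -> Prop) x a b :
  (forall t, P t -> Q t) -> Body E x a b P -> Body E x a b Q.
Proof.
move=> h [H|[[c [h1 h2]]|[[e [c [h1 h2]]]|[e [c [h1 h2]]]]]].
- by left.
- by right; left; exists c; split; apply: h.
- by right; right; left; split=> //; exists c; split; apply: (Fr_mono h).
- by right; right; right; split=> //; exists c; split; apply: (Fr_mono h).
Qed.

Definition SS (V : finType) (E : rel V) va ra (t : seq V) :=
  exists n, stg E 0 [:: 3; 4] body va ra n t.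

Lemma Fr_compact (V : finType) (E : rel V) va ra p q :
  Fr E (SS E va ra) p q -> exists n, Fr E (stg E 0 [:: 3; 4] body va ra n) p q.
Proof. by move=> [[e [n h]]|[e [n h]]]; exists n; [left|right]. Qed.

Lemma SS_closed (V : finType) (E : rel V) va ra a b :
  Body E (va 0) a b (SS E va ra) -> SS E va ra [:: a; b].
Proof.
move=> HB.
suff: exists n, Body E (va 0) a b (stg E 0 [:: 3; 4] body va ra n).
  move=> [n h]; exists n.+1; right; split=> //; by rewrite body_sem.
move: HB => [H|[[c [[n1 h1] [n2 h2]]]|[[e [c [h1 h2]]]|[e [c [h1 h2]]]]]].
- by exists 0; left.
- exists (maxn n1 n2); right; left; exists c; split.
    exact: (stg_le (leq_maxl n1 n2)).
  exact: (stg_le (leq_maxr n1 n2)).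
- case: (Fr_compact h1) => n1 {}h1; case: (Fr_compact h2) => n2 {}h2.
  exists (maxn n1 n2); right; right; left; split=> //; exists c; split.
    by apply: (Fr_mono _ h1) => t; apply: (stg_le (leq_maxl n1 n2)).
  by apply: (Fr_mono _ h2) => t; apply: (stg_le (leq_maxr n1 n2)).
- case: (Fr_compact h1) => n1 {}h1; case: (Fr_compact h2) => n2 {}h2.
  exists (maxn n1 n2); right; right; right; split=> //; exists c; split.
    by apply: (Fr_mono _ h1) => t; apply: (stg_le (leq_maxl n1 n2)).
  by apply: (Fr_mono _ h2) => t; apply: (stg_le (leq_maxr n1 n2)).
Qed.

Definition lift (V : Type) (L : V -> V -> Prop) (t : seq V) : Prop :=
  match t with [:: p; q] => L p q | _ => False end.

Lemma stg_sound (V : finType) (E : rel V) va ra (L : V -> V -> Prop) :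
  (forall a b, Body E (va 0) a b (lift L) -> L a b) ->
  forall n t, stg E 0 [:: 3; 4] body va ra n t -> lift L t.
Proof.
move=> HL; elim=> [|n IH] t //= [h|[hs h]]; first exact: IH.
case: t hs h => [|a [|b [|]]] // _ h.
have {}h : Body E (va 0) a b (stg E 0 [:: 3; 4] body va ra n) := h.
by apply: HL; apply: (Body_mono IH).
Qed.

Lemma char (V : finType) (E : rel V) (Esym : forall u v, E u v = E v u) va ra a b :
  SS E va ra [:: a; b] <-> lhd1 E (va 0) a b.
Proof.
set w := va 0; split.
  move=> [n h]; apply: (stg_sound (L := lhd1 E w) _ h) => {a b n h} a b.
  have FL : forall p q, Fr E (lift (lhd1 E w)) p q -> L2 E w p q.
    move=> p q [[e h]|[e h]]; first by apply: R3 h _; rewrite Esym.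
    by apply: R4 h _; apply/negP.
  move=> [[-> hb]|[[c [h1 h2]]|[[e [c [h1 h2]]]|[e [c [h1 h2]]]]]].
  - exact: Rbase.
  - exact: L1_trans h1 h2.
  - by apply: R2 _ (introN idP e); apply: L2_trans (FL _ _ h1) (FL _ _ h2).
  - by apply: R1 _ _; [apply: L2_trans (FL _ _ h1) (FL _ _ h2) | rewrite Esym].
have Strans : forall a b c, SS E va ra [:: a; b] -> SS E va ra [:: b; c] -> SS E va ra [:: a; c].
  by move=> x y z h1 h2; apply: SS_closed; right; left; exists y.
have Ftrans : forall a b c, Fr E (SS E va ra) a b -> Fr E (SS E va ra) b c ->
    Fr E (SS E va ra) a c.
  move=> x y z h1 h2; case e: (E x z).
    left; split=> //; apply: SS_closed; right; right; right; split; first by rewrite Esym.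
    by exists y.
  right; split; first by rewrite e.
  by apply: SS_closed; right; right; left; split; [rewrite e | exists y].
suff: forall k, (forall a b, (lhd_k E w k).1 a b -> SS E va ra [:: a; b]) /\
                (forall a b, (lhd_k E w k).2 a b -> Fr E (SS E va ra) a b).
  by move=> H [k h]; apply: (proj1 (H k)).
elim=> [|k [IH1 IH2]].
  split=> // x y /= [-> hy]; apply: SS_closed; by left.
rewrite lhd_kS /=; split=> x y; elim=> {x y} [x y h|x y z _ h1 _ h2]; try by [apply: Strans h1 h2 | apply: Ftrans h1 h2].
  case: h => [h|[[h e]|[h e]]]; first exact: IH1.
    by case: (IH2 _ _ h) => [[_ h']|[e' _]] //; rewrite Esym e in e'.
  by case: (IH2 _ _ h) => [[e' _]|[_ h']] //; rewrite e' in e.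
case: h => [h|[[h e]|[h e]]]; first exact: IH2.
  by left; split; [rewrite Esym | apply: IH1].
by right; split; [apply/negP | apply: IH1].
Qed.

Definition dec (P : Prop) : bool := if excluded_middle_informative P then true else false.
Lemma decP (P : Prop) : reflect P (dec P).
Proof. by rewrite /dec; case: excluded_middle_informative => h; constructor. Qed.

Lemma slo_min (V : finType) (lt : V -> V -> Prop) : strict_linear_order lt ->
  forall s : seq V, s <> [::] -> exists2 m, m \in s & forall x, x \in s -> x = m \/ lt m x.
Proof.
move=> [irr [tr tot]]; elim=> [//|x s IH] _.
case: s IH => [|y s] IH.
  by exists x; rewrite ?inE // => z; rewrite inE => /eqP ->; left.
have [m ms hm] := IH ltac:(done).
have [->|ne] := eqVneq x m.
  exists m; first by rewrite inE eqxx.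
  by move=> z; rewrite inE => /orP [/eqP ->|/hm]; [left|].
case: (tot x m (elimN eqP ne)) => h.
  exists x; first by rewrite inE eqxx.
  move=> z; rewrite inE => /orP [/eqP ->|/hm [->|h']]; [by left|by right|].
  by right; apply: tr h h'.
exists m; first by rewrite inE ms orbT.
by move=> z; rewrite inE => /orP [/eqP ->|/hm //]; right.
Qed.

Lemma realizer_swap (V : finType) (E : rel V) A B : realizer E A B -> realizer E B A.
Proof. move=> [hA [hB h]]; split=> //; split=> // u v uv; rewrite h //; tauto. Qed.

Lemma closE_sound (V : finType) (E : rel V) (Esym : forall u v, E u v = E v u) A B
  (li lo : V -> V -> Prop) : realizer E A B ->
  (forall a b, li a b -> A a b) -> (forall a b, lo a b -> B a b) ->
  forall a b, closE_comp E li lo a b -> A a b.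
Proof.
move=> [[irA [trA totA]] [[irB [trB totB]] h]] hli hlo a b [H|[[H e]|[H e]]].
- exact: hli.
- have Bba := hlo _ _ H.
  have ba : b <> a by move=> eq; subst; exact: irB Bba.
  case: ((h b a ba).1 e) => [[_ Bab]|[Aab _]] //.
  by case: (irB a); apply: trB Bab Bba.
- have Bab := hlo _ _ H.
  have ab : a <> b by move=> eq; subst; exact: irB Bab.
  case: (totA a b ab) => // Aba.
  have : E b a by apply/(h b a (nesym ab)); left.
  by rewrite Esym (negbTE e).
Qed.

Lemma ct_sound (V : Type) (R A : V -> V -> Prop) :
  (forall x y z, A x y -> A y z -> A x z) ->
  (forall a b, R a b -> A a b) -> forall a b, clos_trans V R a b -> A a b.
Proof. move=> tr h a b; elim=> [x y /h //|x y z _ h1 _ h2]; exact: tr h1 h2. Qed.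

Lemma lhd_sound (V : finType) (E : rel V) (Esym : forall u v, E u v = E v u) A B w :
  realizer E A B -> (forall v, v <> w -> A w v) ->
  forall k, (forall a b, (lhd_k E w k).1 a b -> A a b) /\
            (forall a b, (lhd_k E w k).2 a b -> B a b).
Proof.
move=> hr hw; have hr' := realizer_swap hr.
have trA := proj1 (proj2 (proj1 hr)); have trB := proj1 (proj2 (proj1 (proj2 hr))).
elim=> [|k [IH1 IH2]]; first by split=> // a b /= [-> h]; apply: hw.
rewrite lhd_kS /=; split; apply: ct_sound => //.
  exact: (closE_sound Esym hr IH1 IH2).
exact: (closE_sound Esym hr' IH2 IH1).
Qed.

Definition inc (V : finType) (E : rel V) w (u v : V) :=
  u <> v /\ ~ lhd1 E w u v /\ ~ lhd1 E w v u.

Lemma nosplit (V : finType) (E : rel V) (Esym : forall u v, E u v = E v u) w a b x :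
  inc E w a b -> (lhd1 E w x a \/ lhd1 E w a x) -> (lhd1 E w x b \/ lhd1 E w b x) ->
  E x a -> E x b.
Proof.
move=> [ab [nab nba]] ca cb exa; case exb: (E x b) => //.
have nexb : ~~ E x b by rewrite exb.
have L2ab : ~ L2 E w a b.
  by move=> h; case eab: (E a b); [apply: nba; apply: R1 h _ | apply: nab; apply: R2 h _; rewrite eab].
have L2ba : ~ L2 E w b a.
  by move=> h; case eab: (E b a); [apply: nab; apply: R1 h _ | apply: nba; apply: R2 h _; rewrite eab].
exfalso; case: ca => [hxa|hax].
  have h1 := R3 hxa exa.
  case: cb => [hxb|hbx].
    by apply: L2ab; apply: L2_trans h1 (R4 hxb nexb).
  by apply: nba; apply: L1_trans hbx hxa.
have h1 : L2 E w x a by apply: R3 hax _; rewrite Esym.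
case: cb => [hxb|hbx].
  by apply: nab; apply: L1_trans hax hxb.
by apply: L2ba; apply: L2_trans (R4 hbx _) h1; rewrite Esym.
Qed.

Lemma total (V : finType) (E : rel V) (Esym : forall u v, E u v = E v u)
  (pr : prime_graph E) w a b : a <> b -> lhd1 E w a b \/ lhd1 E w b a.
Proof.
move=> ab; apply: NNPP => hn.
have iab : inc E w a b by split=> //; split=> h; apply: hn; [left|right].
pose C := [set y | dec (clos_refl_trans V (inc E w) a y)].
have inC : forall y, (y \in C) <-> clos_refl_trans V (inc E w) a y.
  by move=> y; rewrite inE; split => /decP.
have aC : a \in C by apply/inC; apply: rt_refl.
have bC : b \in C by apply/inC; apply: rt_step.
have wC : w \notin C.
  apply/negP => hw.
  suff: forall y, clos_refl_trans_n1 V (inc E w) a y -> y = w -> False.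
    by move/(_ w); apply => //; apply: clos_rt_rtn1; apply/inC.
  move=> y; case=> [aw|z y' H _ yw].
    case: iab => _ [h1 _]; apply: h1; rewrite aw; apply: Rbase.
    by move=> bw; apply: ab; rewrite aw bw.
  by rewrite yw in H; case: H => h1 [_ h3]; apply: h3; apply: Rbase.
have comp : forall x m, x \notin C -> m \in C -> lhd1 E w x m \/ lhd1 E w m x.
  move=> x m xC mC; apply: NNPP => hc.
  have xm : m <> x by move=> eq; subst; rewrite mC in xC.
  move/negP: xC; apply; apply/inC; apply: (rt_trans _ _ _ m); first exact/inC.
  by apply: rt_step; split=> //; split=> h; apply: hc; [right|left].
have same : forall x, x \notin C -> forall s m, clos_refl_trans_1n V (inc E w) s m ->
    s \in C -> E x m = E x s.
  move=> x xC s m; elim=> // {}s y {}m hsy _ IH sC.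
  have yC : y \in C.
    by apply/inC; apply: (rt_trans _ _ _ s); [apply/inC | apply: rt_step].
  rewrite IH //; apply/idP/idP.
    apply: (nosplit Esym _ (comp _ _ xC yC) (comp _ _ xC sC)).
    by case: hsy => h1 [h2 h3]; split=> //; apply: nesym.
  exact: (nosplit Esym hsy (comp _ _ xC sC) (comp _ _ xC yC)).
have modC : is_module E C.
  split; first by apply/set0Pn; exists a.
  move=> x xC.
  have eq : forall m, m \in C -> E x m = E x a.
    by move=> m mC; apply: (same x xC a m) => //; apply: clos_rt_rt1n; apply/inC.
  case exa: (E x a); [left|right] => m /eq ->; by rewrite exa.
case: (pr C modC) => [CT|/eqP /cards1P [c Cc]].
  by move: wC; rewrite CT inE.
move: aC bC; rewrite Cc !inE => /eqP ac /eqP bc; apply: ab; by rewrite ac bc.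
Qed.

Theorem corollary5p8 :
  (exists phi1 : formula,
     formula_xyy' phi1 /\
     forall (V : finType) (E : rel V),
       simple_graph E -> prime_graph E -> permutation_graph E ->
       forall w v v' : V, models3 E phi1 w v v' <-> lhd1 E w v v')
  /\
  (forall phi1 : formula,
     formula_xyy' phi1 ->
     (forall (V : finType) (E : rel V),
        simple_graph E -> prime_graph E -> permutation_graph E ->
        forall w v v' : V, models3 E phi1 w v v' <-> lhd1 E w v v') ->
     forall (V : finType) (E : rel V),
       simple_graph E -> prime_graph E -> permutation_graph E ->
       exists w : V, linear_order (fun v v' => models3 E (FOr phi1 (FEq 1 2)) w v v')).
Proof.
split.
  exists phi1; split; first exact: phi1_free.
  move=> V E [_ [Esym _]] _ _ w v v'.
  rewrite /models3 sem_ifp /=.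
  exact: (char Esym (fun i => nth w [:: w; v; v'] i) (fun _ _ => False) v v').
move=> phi _ hphi V E sg pr pg.
have [[v0 _] [Esym irr]] := sg.
case: pg => lt1 [lt2 hr].
have [w _ hw] : exists2 m, m \in enum V & forall x, x \in enum V -> x = m \/ lt1 m x.
  apply: (slo_min (proj1 hr)) => e.
  by have := mem_enum V v0; rewrite e.
have hw' : forall v, v <> w -> lt1 w v.
  by move=> v vw; case: (hw v (mem_enum V v)).
exists w.
have key : forall v v', models3 E (FOr phi (FEq 1 2)) w v v' <-> lhd1 E w v v' \/ v = v'.
  move=> v v'; change (models3 E phi w v v' \/ v = v' <-> lhd1 E w v v' \/ v = v').
  by rewrite (hphi V E sg pr (ex_intro _ lt1 (ex_intro _ lt2 hr))).
have irrL : forall v, ~ lhd1 E w v v.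
  move=> v [k h]; have := (proj1 (lhd_sound Esym hr hw' k)) v v h.
  exact: (proj1 (proj1 hr)).
split; [|split; [|split]].
- by move=> v; apply/key; right.
- move=> x y /key [h|//] /key [h'|//]; by case: (irrL x); apply: L1_trans h h'.
- move=> x y z /key [h|->] /key [h'|<-]; apply/key; try by right.
  + by left; apply: L1_trans h h'.
  + by left.
  + by left.
- move=> x y; case: (classic (x = y)) => [->|xy]; first by left; apply/key; right.
  by case: (total Esym pr w xy) => h; [left|right]; apply/key; left.
Qed.
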